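(* Define the following equivalence relation on $SU(2)$: $g_1\approx g_2$ if there exist $(a_1,b_1,c_1),(a_2,b_2,c_2)$ such that $g_1=e^{-b_1p_2}e^{a_1p_1}e^{c_1p_2}$, $g_2=e^{-b_2p_2}e^{a_2p_1}e^{c_2p_2}$ and $a_1=a_2$, $b_1=b_2$, $c_1=c_2 \mod \pi$. Then the 3-D manifold $SU(2)/\approx$ is the lens space $L(4,1)$.
   Context: $SU(2)=\{\begin{pmatrix}\alpha&\beta\\-\bar\beta&\bar\alpha\end{pmatrix}\in \mathrm{Mat}(2,\mathbb{C}) : |\alpha|^2+|\beta|^2=1\}$, with Lie algebra basis $p_1=\frac12\begin{pmatrix}0&1\\-1&0\end{pmatrix}$, $p_2=\frac12\begin{pmatrix}0&i\\i&0\end{pmatrix}$, $k=\frac12\begin{pmatrix}i&0\\0&-i\end{pmatrix}$. Every $g\in SU(2)$ can be written as $g=e^{-bp_2}e^{ap_1}e^{cp_2}$ with $a\in[0,\pi]$, $b\in[0,2\pi)$, $c\in\mathbb{R}/(4\pi)$; $a$ is uniquely determined by $g$, and $b,c$ are uniquely determined when $a\neq 0,\pi$ (for $a=0$ only $c-b \mod 4\pi$ is determined, for $a=\pi$ only $c+b\mod 4\pi$). The lens space $L(p,q)$ ($p,q$ coprime nonzero integers) is $S^3/\sim$, where $S^3=\{(x_1,x_2)\in\mathbb{C}^2 : |x_1|^2+|x_2|^2=1\}$ and $(x_1,x_2)\sim(y_1,y_2)$ iff there is $\omega\in\mathbb{C}$ with $\omega^p=1$ and $x_1=\omega y_1$,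 $x_2=\omega^q y_2$. *)

(* Defs.v *)
From HB Require Import structures.
From mathcomp Require Import all_boot all_order all_algebra.
From mathcomp Require Import all_classical all_reals all_analysis.
From mathcomp Require Import complex.
Set Implicit Arguments. Unset Strict Implicit. Unset Printing Implicit Defensive.
Import Order.TTheory GRing.Theory Num.Theory.
Import numFieldNormedType.Exports.
Local Open Scope classical_set_scope.
Local Open Scope ring_scope.

(** We quotient by the equivalence closure of the relation; for relations
    that are already equivalence relations (as in the paper) this is the
    relation itself. *)
Section EqClosure.
Variable T : Type.
Variable r : T -> T -> Prop.

Definition eqclos (x y : T) : Prop :=
  forall E : T -> T -> Prop,
    (forall a, E a a) -> (forall a b, E a b -> E b a) ->
    (forall a b c, E a b -> E b c -> E a c) ->
    (forall a b, r a b -> E a b) -> E x y.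

Definition eqclosb : rel T := fun x y => `[< eqclos x y >].

Lemma eqclosb_refl : reflexive eqclosb.
Proof. by move=> x; apply/asboolP => E Er _ _ _. Qed.

Lemma eqclosb_sym : symmetric eqclosb.
Proof.
have H x y : eqclos x y -> eqclos y x.
  by move=> Hxy E Er Es Et Hr; exact: (Es _ _ (Hxy E Er Es Et Hr)).
move=> x y; rewrite /eqclosb.
by apply/idP/idP => /asboolP Hb; apply/asboolP; exact: H.
Qed.

Lemma eqclosb_trans : transitive eqclosb.
Proof.
move=> y x z /asboolP Hxy /asboolP Hyz; apply/asboolP => E Er Es Et Hr.
exact: (Et _ _ _ (Hxy E Er Es Et Hr) (Hyz E Er Es Et Hr)).
Qed.

Definition eqclos_equiv : equiv_rel T :=
  EquivRel eqclosb eqclosb_refl eqclosb_sym eqclosb_trans.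
End EqClosure.

Definition quot (X : topologicalType) (r : X -> X -> Prop) : topologicalType :=
  quotient_topology {eq_quot (eqclos_equiv r)}%qT.

Definition homeomorphic (X Y : topologicalType) : Prop :=
  exists (f : X -> Y) (g : Y -> X),
    [/\ cancel f g, cancel g f, continuous f & continuous g].

Section SU2.
Variable R : realType.
Local Open Scope complex_scope.

(** Points of C^2 are encoded by their real coordinates
    ((Re x1, Im x1), (Re x2, Im x2)), with the product topology of R^4. *)
Local Notation C2 := ((R * R) * (R * R))%type.

Definition cx1 (x : C2) : R[i] := Complex x.1.1 x.1.2.
Definition cx2 (x : C2) : R[i] := Complex x.2.1 x.2.2.

Definition sphere3 : set C2 :=
  [set x | x.1.1 ^+ 2 + x.1.2 ^+ 2 + x.2.1 ^+ 2 + x.2.2 ^+ 2 = 1].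
Local Notation S3 := (set_type sphere3).

(** SU(2) = { [[alpha, beta], [-conj beta, conj alpha]] : |alpha|^2+|beta|^2=1 }.
    A matrix of SU(2) is encoded by its first row (alpha, beta) in S^3; this
    identification (with the topology of Mat(2,C)) is a homeomorphism. *)
Local Notation SU2 := S3.

(** Multiplication of SU(2) matrices in the (alpha, beta) encoding:
    [[a,b],[-conj b,conj a]] [[c,d],[-conj d,conj c]] has first row (a c - b conj(d), a d + b conj(c)). *)
Definition su2_mul (g h : R[i] * R[i]) : R[i] * R[i] :=
  (g.1 * h.1 - g.2 * conjc h.2, g.1 * h.2 + g.2 * conjc h.1).

(** Matrix exponentials (closed forms, since (2 p1)^2 = (2 p2)^2 = -1):
    exp(t p1) = [[cos(t/2), sin(t/2)], [-sin(t/2), cos(t/2)]],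
    exp(t p2) = [[cos(t/2), i sin(t/2)], [i sin(t/2), cos(t/2)]]. *)
Definition exp_p1 (t : R) : R[i] * R[i] :=
  (Complex (cos (t / 2)) 0, Complex (sin (t / 2)) 0).
Definition exp_p2 (t : R) : R[i] * R[i] :=
  (Complex (cos (t / 2)) 0, Complex 0 (sin (t / 2))).

Definition euler (a b c : R) : R[i] * R[i] :=
  su2_mul (su2_mul (exp_p2 (- b)) (exp_p1 a)) (exp_p2 c).

Definition su2_coords (g : SU2) : R[i] * R[i] :=
  (cx1 (set_val g), cx2 (set_val g)).

(** Admissible Euler parameters: a in [0, pi], b in [0, 2 pi), c real
    (c is only meaningful modulo 4 pi, and euler is 4 pi-periodic in c). *)
Definition euler_param (a b c : R) : Prop :=
  0 <= a <= pi /\ 0 <= b < 2 * pi.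

Definition approx (g1 g2 : SU2) : Prop :=
  exists a1 b1 c1 a2 b2 c2 : R,
    [/\ euler_param a1 b1 c1, euler_param a2 b2 c2,
        su2_coords g1 = euler a1 b1 c1, su2_coords g2 = euler a2 b2 c2 &
        [/\ a1 = a2, b1 = b2 & exists k : int, c1 - c2 = k%:~R * pi]].

Definition lens_rel (p q : int) (x y : S3) : Prop :=
  exists w : R[i], w ^ p = 1 /\
    cx1 (set_val x) = w * cx1 (set_val y) /\
    cx2 (set_val x) = w ^ q * cx2 (set_val y).

Definition lens_space (p q : int) : topologicalType := quot (@lens_rel p q).

Definition SU2_mod_approx : topologicalType := quot approx.

End SU2.

(* Main.v *)
Require Import Defs.
From HB Require Import structures.
From mathcomp Require Import all_boot all_order all_algebra.
From mathcomp Require Import all_classical all_reals all_analysis.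
From mathcomp Require Import complex.
From mathcomp Require Import ring lra.
Set Implicit Arguments. Unset Strict Implicit. Unset Printing Implicit Defensive.
Import Order.TTheory GRing.Theory Num.Theory.
Import numFieldNormedType.Exports.
Local Open Scope classical_set_scope.
Local Open Scope ring_scope.
Local Open Scope quotient_scope.
Section Q.
Variable X : topologicalType.

Lemma eqclos_refl (r : X -> X -> Prop) x : eqclos r x x.
Proof. by move=> E Er. Qed.
Lemma eqclos_sym (r : X -> X -> Prop) x y : eqclos r x y -> eqclos r y x.
Proof. by move=> H E Er Es Et Hr; exact: (Es _ _ (H E Er Es Et Hr)). Qed.
Lemma eqclos_trans (r : X -> X -> Prop) x y z : eqclos r x y -> eqclos r y z -> eqclos r x z.
Proof. by move=> H1 H2 E Er Es Et Hr; exact: (Et _ y _ (H1 E Er Es Et Hr) (H2 E Er Es Et Hr)). Qed.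
Lemma eqclos_incl (r : X -> X -> Prop) x y : r x y -> eqclos r x y.
Proof. by move=> H E Er Es Et Hr; exact: Hr. Qed.
Lemma eqclos_map (r1 r2 : X -> X -> Prop) (f : X -> X) :
  (forall x y, r1 x y -> eqclos r2 (f x) (f y)) ->
  forall x y, eqclos r1 x y -> eqclos r2 (f x) (f y).
Proof.
move=> H x y Hxy; apply: (Hxy (fun a b => eqclos r2 (f a) (f b))).
- by move=> a; exact: eqclos_refl.
- by move=> a b; exact: eqclos_sym.
- by move=> a b c; exact: eqclos_trans.
- exact: H.
Qed.

Lemma piE (r : X -> X -> Prop) (x y : X) :
  (\pi_(quot r) x = \pi_(quot r) y) <-> eqclos r x y.
Proof.
split.
  by move/eqquotP => /asboolP.
by move=> H; apply/eqquotP; apply/asboolP.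
Qed.

Lemma quot_homeo (r1 r2 : X -> X -> Prop) (phi psi : X -> X) :
  continuous phi -> continuous psi -> cancel phi psi -> cancel psi phi ->
  (forall x y, r1 x y -> eqclos r2 (phi x) (phi y)) ->
  (forall x y, r2 x y -> eqclos r1 (psi x) (psi y)) ->
  homeomorphic (quot r1) (quot r2).
Proof.
move=> cphi cpsi phiK psiK H1 H2.
have E1 := eqclos_map H1; have E2 := eqclos_map H2.
pose f := (fun q : quot r1 => \pi_(quot r2) (phi (repr q))).
pose g := (fun q : quot r2 => \pi_(quot r1) (psi (repr q))).
exists f, g; split.
- move=> q; rewrite /f /g -[RHS]reprK; apply/piE.
  rewrite -[X in eqclos _ _ X]phiK; apply: E2.
  apply/(piE r2); by rewrite reprK.
- move=> q; rewrite /f /g -[RHS]reprK; apply/piE.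
  rewrite -[X in eqclos _ _ X]psiK; apply: E1.
  apply/(piE r1); by rewrite reprK.
- apply: (@repr_comp_continuous _ _ _ (\pi_(quot r2) \o phi)).
    move=> x; apply: continuous_comp; [exact: cphi|exact: pi_continuous].
  by move=> a b /eqP /piE /E1 /piE h; apply/eqP; exact: h.
- apply: (@repr_comp_continuous _ _ _ (\pi_(quot r1) \o psi)).
    move=> x; apply: continuous_comp; [exact: cpsi|exact: pi_continuous].
  by move=> a b /eqP /piE /E2 /piE h; apply/eqP; exact: h.
Qed.
End Q.
Section S.
Variable R : realType.
Local Notation C2 := ((R * R) * (R * R))%type.
Local Notation S3 := (set_type (@sphere3 R)).

Lemma cont_c11 : continuous (fun x : C2 => x.1.1).
Proof.
move=> x; apply: (@cvg_comp _ _ _ fst fst); [exact: cvg_fst | exact: cvg_fst].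
Qed.
Lemma cont_c12 : continuous (fun x : C2 => x.1.2).
Proof. move=> x; apply: (@cvg_comp _ _ _ fst snd); [exact: cvg_fst | exact: cvg_snd]. Qed.
Lemma cont_c21 : continuous (fun x : C2 => x.2.1).
Proof. move=> x; apply: (@cvg_comp _ _ _ snd fst); [exact: cvg_snd | exact: cvg_fst]. Qed.
Lemma cont_c22 : continuous (fun x : C2 => x.2.2).
Proof. move=> x; apply: (@cvg_comp _ _ _ snd snd); [exact: cvg_snd | exact: cvg_snd]. Qed.

Lemma cont_mk (T : topologicalType) (f1 f2 f3 f4 : T -> R) :
  continuous f1 -> continuous f2 -> continuous f3 -> continuous f4 ->
  continuous (fun x => (((f1 x, f2 x), (f3 x, f4 x)) : C2)).
Proof.
move=> c1 c2 c3 c4 x.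
apply: (@cvg_pair _ _ _ (nbhs x) (nbhs (f1 x, f2 x)) (nbhs (f3 x, f4 x)) _ _ _ (fun x => (f1 x, f2 x)) (fun x => (f3 x, f4 x))).
  exact: (@cvg_pair _ _ _ (nbhs x) (nbhs (f1 x)) (nbhs (f2 x)) _ _ _ f1 f2 (c1 x) (c2 x)).
exact: (@cvg_pair _ _ _ (nbhs x) (nbhs (f3 x)) (nbhs (f4 x)) _ _ _ f3 f4 (c3 x) (c4 x)).
Qed.

Definition s2 : R := Num.sqrt (2^-1).
Lemma s2_sq : s2 ^+ 2 = 2^-1.
Proof. by rewrite sqr_sqrtr // invr_ge0. Qed.

Definition sq4 (x : C2) := x.1.1^+2 + x.1.2^+2 + x.2.1^+2 + x.2.2^+2.

Definition Phi (x : C2) : C2 :=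
  ((s2*(x.1.1+x.2.1), s2*(x.1.2+x.2.2)), (s2*(x.1.1-x.2.1), s2*(x.2.2-x.1.2))).
Definition Psi (z : C2) : C2 :=
  ((s2*(z.1.1+z.2.1), s2*(z.1.2-z.2.2)), (s2*(z.1.1-z.2.1), s2*(z.1.2+z.2.2))).
Definition Hm (x : C2) : C2 := ((-x.2.2, x.2.1), (-x.1.2, x.1.1)).

Lemma sq4_Phi x : sq4 (Phi x) = sq4 x.
Proof.
rewrite /sq4 /=; have h := s2_sq.
transitivity (s2^+2 * 2 * sq4 x); first by rewrite /sq4; ring.
by rewrite h mulVf ?mul1r // pnatr_eq0.
Qed.
Lemma sq4_Psi x : sq4 (Psi x) = sq4 x.
Proof.
rewrite /sq4 /=; have h := s2_sq.
transitivity (s2^+2 * 2 * sq4 x); first by rewrite /sq4; ring.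
by rewrite h mulVf ?mul1r // pnatr_eq0.
Qed.
Lemma sq4_Hm x : sq4 (Hm x) = sq4 x.
Proof. by rewrite /sq4 /=; ring. Qed.

Lemma PhiK x : Psi (Phi x) = x.
Proof.
case: x => [[a b] [c d]]; rewrite /Psi /Phi /=.
have h : s2 * s2 = 2^-1 by rewrite -expr2 s2_sq.
have e : forall u, s2 * (s2 * u) = 2^-1 * u by move=> u; rewrite mulrA h.
congr ((_,_),(_,_)); rewrite ?(mulrDr, mulrBr, mulrA, mulrN) -?expr2 ?s2_sq. all: by field.
Qed.
Lemma PsiK x : Phi (Psi x) = x.
Proof.
case: x => [[a b] [c d]]; rewrite /Psi /Phi /=.
congr ((_,_),(_,_)); rewrite ?(mulrDr, mulrBr, mulrA, mulrN) -?expr2 ?s2_sq.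
all: by field.
Qed.

Lemma sphereP (x : S3) : sq4 (set_val x) = 1.
Proof. exact: set_valP x. Qed.

Definition liftS (F : C2 -> C2) (HF : forall x, sq4 (F x) = sq4 x) (x : S3) : S3 :=
  exist _ (F (set_val x)) (mem_set (etrans (HF _) (sphereP x))).


Lemma liftS_cont F HF : continuous F -> continuous (@liftS F HF).
Proof.
move=> cF; apply: continuous_comp_initial.
have -> : set_val \o liftS HF = F \o set_val by [].
move=> x; apply: continuous_comp; [exact: initial_continuous | exact: cF].
Qed.

Lemma cK (T : topologicalType) (k : R) (f : T -> R) :
  continuous f -> continuous (fun x => k * f x).
Proof. move=> cf x. exact: (@continuousM R T (fun=> k) f x (@cvg_cst _ _ _ _ _) (cf x)). Qed.
Lemma cD (T : topologicalType) (f g : T -> R) :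
  continuous f -> continuous g -> continuous (fun x => f x + g x).
Proof. by move=> cf cg x; exact: (@continuousD R R^o T f g x (cf x) (cg x)). Qed.
Lemma cB (T : topologicalType) (f g : T -> R) :
  continuous f -> continuous g -> continuous (fun x => f x - g x).
Proof. by move=> cf cg x; exact: (@continuousB R R^o T f g x (cf x) (cg x)). Qed.
Lemma cN (T : topologicalType) (f : T -> R) :
  continuous f -> continuous (fun x => - f x).
Proof. by move=> cf x; exact: (@continuousN R R^o T f x (cf x)). Qed.

Lemma Phi_cont : continuous Phi.
Proof.
apply: cont_mk; apply: cK; first [apply: cB | apply: cD];
  first [apply: cont_c11|apply: cont_c12|apply: cont_c21|apply: cont_c22].
Qed.
Lemma Psi_cont : continuous Psi.
Proof.
apply: cont_mk; apply: cK; first [apply: cB | apply: cD];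
  first [apply: cont_c11|apply: cont_c12|apply: cont_c21|apply: cont_c22].
Qed.

Definition phiS := liftS sq4_Phi.
Definition psiS := liftS sq4_Psi.
Definition rotS := liftS sq4_Hm.

Lemma val_phiS x : set_val (phiS x) = Phi (set_val x). Proof. by []. Qed.
Lemma val_psiS x : set_val (psiS x) = Psi (set_val x). Proof. by []. Qed.
Lemma val_rotS x : set_val (rotS x) = Hm (set_val x). Proof. by []. Qed.

Lemma phiS_cont : continuous phiS.
Proof. exact/liftS_cont/Phi_cont. Qed.
Lemma psiS_cont : continuous psiS.
Proof. exact/liftS_cont/Psi_cont. Qed.
Lemma phiSK : cancel phiS psiS.
Proof. by move=> x; apply: val_inj; rewrite /= PhiK. Qed.
Lemma psiSK : cancel psiS phiS.
Proof. by move=> x; apply: val_inj; rewrite /= PsiK. Qed.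

Definition ii : complex R := Complex 0 1.
Definition Imul (z : C2) : C2 := ((-z.1.2, z.1.1), (-z.2.2, z.2.1)).
Definition rotC (p : complex R * complex R) := (ii * p.2, ii * p.1).

Lemma cx_inj (u v : C2) : cx1 u = cx1 v -> cx2 u = cx2 v -> u = v.
Proof.
case: u => [[a b][c d]]; case: v => [[a' b'][c' d']].
by rewrite /cx1 /cx2 /= => -[-> ->] [-> ->].
Qed.

Lemma cx1_Imul z : cx1 (Imul z) = ii * cx1 z.
Proof.
rewrite /cx1 /ii /=; apply/eqP; rewrite eq_complex /=; apply/andP; split; apply/eqP; ring.
Qed.
Lemma cx2_Imul z : cx2 (Imul z) = ii * cx2 z.
Proof.
rewrite /cx2 /ii /=; apply/eqP; rewrite eq_complex /=; apply/andP; split; apply/eqP; ring.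
Qed.

Lemma cx_Hm z : (cx1 (Hm z), cx2 (Hm z)) = rotC (cx1 z, cx2 z).
Proof.
rewrite /cx1 /cx2 /rotC /ii /=; congr (_,_);
  apply/eqP; rewrite eq_complex /=; apply/andP; split; apply/eqP; ring.
Qed.

Lemma Phi_Hm z : Phi (Hm z) = Imul (Phi z).
Proof. rewrite /Phi /Hm /Imul /=; congr ((_,_),(_,_)); ring. Qed.
Lemma Psi_Imul z : Psi (Imul z) = Hm (Psi z).
Proof. rewrite /Psi /Hm /Imul /=; congr ((_,_),(_,_)); ring. Qed.

Lemma cx_iter_Hm n z :
  (cx1 (iter n Hm z), cx2 (iter n Hm z)) = iter n rotC (cx1 z, cx2 z).
Proof. by elim: n => //= n <-; rewrite cx_Hm. Qed.

Lemma Phi_iter n z : Phi (iter n Hm z) = iter n Imul (Phi z).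
Proof. by elim: n => //= n <-; rewrite Phi_Hm. Qed.
Lemma Psi_iter n z : Psi (iter n Imul z) = iter n Hm (Psi z).
Proof. by elim: n => //= n <-; rewrite Psi_Imul. Qed.

Lemma cx1_iter n z : cx1 (iter n Imul z) = ii ^+ n * cx1 z.
Proof. by elim: n => [|n IH] /=; rewrite ?mul1r // cx1_Imul IH exprS mulrA. Qed.
Lemma cx2_iter n z : cx2 (iter n Imul z) = ii ^+ n * cx2 z.
Proof. by elim: n => [|n IH] /=; rewrite ?mul1r // cx2_Imul IH exprS mulrA. Qed.

Lemma val_iter_rotS n p : set_val (iter n rotS p) = iter n Hm (set_val p).
Proof. by elim: n => //= n <-. Qed.

Lemma ii4 : ii ^+ 4 = 1.
Proof.
rewrite /ii !exprS expr0; apply/eqP; rewrite eq_complex /=; apply/andP; split; apply/eqP; ring.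
Qed.

Lemma roots4 (w : complex R) : w ^+ 4 = 1 -> exists n : nat, w = ii ^+ n.
Proof.
move=> h.
have e : (w - 1) * (w + 1) * (w - ii) * (w + ii) = 0.
  have -> : (w - 1) * (w + 1) * (w - ii) * (w + ii) = w ^+ 4 - (1 + ii ^+ 2) * w ^+ 2 + ii ^+ 2.
    by ring.
  have i2 : ii ^+ 2 = -1.
    rewrite /ii !exprS expr0; apply/eqP; rewrite eq_complex /=; apply/andP; split; apply/eqP; ring.
  by rewrite h i2; ring.
move/eqP: e; rewrite !mulf_eq0 -!orbA => /or4P [] /eqP.
- by move/eqP; rewrite subr_eq0 => /eqP ->; exists 0%N.
- move/eqP; rewrite addr_eq0 => /eqP ->; exists 2%N.
  rewrite /ii !exprS expr0; apply/eqP; rewrite eq_complex /=; apply/andP; split; apply/eqP; ring.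
- by move/eqP; rewrite subr_eq0 => /eqP ->; exists 1%N; rewrite expr1.
- move/eqP; rewrite addr_eq0 => /eqP ->; exists 3%N.
  rewrite /ii !exprS expr0; apply/eqP; rewrite eq_complex /=; apply/andP; split; apply/eqP; ring.
Qed.

Lemma euler_pi a b c : euler a b (c + pi) = rotC (euler a b c).
Proof.
rewrite /euler; set P := su2_mul (exp_p2 (-b)) (exp_p1 a); case: P => [[p1 p2] [q1 q2]].
rewrite /exp_p2 mulrDl cosDpihalf sinDpihalf /su2_mul /rotC /ii /=.
congr (_,_); apply/eqP; rewrite eq_complex /=; apply/andP; split; apply/eqP; ring.
Qed.

Lemma euler_npi n a b c : euler a b (c + n%:R * pi) = iter n rotC (euler a b c).
Proof.
elim: n => [|n IH]; first by rewrite mul0r addr0.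
by rewrite -addn1 natrD mulrDl mul1r addrA euler_pi IH addn1.
Qed.

Lemma coords_iter n (x y : S3) :
  su2_coords x = iter n rotC (su2_coords y) -> set_val x = iter n Hm (set_val y).
Proof.
rewrite /su2_coords -cx_iter_Hm => h.
exact: (cx_inj (f_equal fst h) (f_equal snd h)).
Qed.

Lemma lens_of_iter n (x y : S3) :
  set_val x = iter n Hm (set_val y) -> lens_rel 4 1 (phiS x) (phiS y).
Proof.
move=> h; exists (ii ^+ n); split; last split.
- by rewrite (_ : (ii ^+ n) ^ (4:int) = (ii ^+ n) ^+ 4) // -exprM mulnC exprM ii4 expr1n.
- by rewrite !val_phiS h Phi_iter cx1_iter.
- by rewrite (_ : (ii ^+ n) ^ (1:int) = ii ^+ n) // !val_phiS h Phi_iter cx2_iter.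
Qed.

Lemma H1 (x y : S3) : Defs.approx x y -> eqclos (lens_rel 4 1) (phiS x) (phiS y).
Proof.
move=> [a1 [b1 [c1 [a2 [b2 [c2 [_ _ ex ey [ea eb [k ek]]]]]]]]].
subst a2 b2; case: k ek => n ek.
- apply: eqclos_incl; apply: (@lens_of_iter n); apply: coords_iter.
  rewrite ex ey -euler_npi; congr euler.
  by rewrite -ek addrC subrK.
- apply: eqclos_sym; apply: eqclos_incl; apply: (@lens_of_iter n.+1); apply: coords_iter.
  rewrite ex ey -euler_npi; congr euler.
  have ek' : c2 - c1 = n.+1%:R * pi.
    by rewrite -opprB ek -mulNr -intrN.
  by rewrite -ek' addrC subrK.
Qed.


Lemma polar (x y r : R) : 0 <= r -> x^+2 + y^+2 = r^+2 ->
  exists t, -pi <= t <= pi /\ x = r * cos t /\ y = r * sin t.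
Proof.
move=> r0 h.
have [r00|rn0] := eqVneq r 0.
  subst r.
  have hx := sqr_ge0 x; have hy := sqr_ge0 y.
  have h0 : x^+2 + y^+2 = 0 by rewrite h expr0n.
  have x0 : x = 0 by apply/eqP; rewrite -sqrf_eq0; apply/eqP; lra.
  have y0 : y = 0 by apply/eqP; rewrite -sqrf_eq0; apply/eqP; lra.
  exists 0; rewrite x0 y0 !mul0r; split => //.
  have := pi_ge0 R; lra.
have rp : 0 < r by rewrite lt0r rn0.
set u := x / r.
have hxr : - r <= x <= r by apply/andP; split; nra.
have hu : -1 <= u <= 1.
  rewrite /u; apply/andP; split.
    by rewrite ler_pdivlMr // mulN1r; case/andP: hxr.
  by rewrite ler_pdivrMr // mul1r; case/andP: hxr.
have [/andP [t0 t1] ct] := acos_def hu.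
have st : sin (acos u) = `|y / r|.
  rewrite sin_acos // -sqrtr_sqr; congr Num.sqrt.
  apply/eqP; rewrite -subr_eq0 /u.
  have -> : (1 - (x/r)^+2) - (y/r)^+2 = (r^+2 - (x^+2 + y^+2)) / r^+2 by field.
  by rewrite h subrr mul0r.
have [y0|y0] := leP 0 y.
  exists (acos u); split; first by apply/andP; split; lra.
  split; first by rewrite ct /u mulrC divfK.
  by rewrite st ger0_norm ?divr_ge0 // mulrC divfK.
exists (- acos u); split; first by apply/andP; split; lra.
split; first by rewrite cosN ct /u mulrC divfK.
have yr : y / r < 0 by rewrite ltr_pdivrMr // mul0r.
by rewrite sinN st ltr0_norm // opprK mulrC divfK.
Qed.


Lemma halfang (A B : R) : 0 <= A -> 0 <= B -> A^+2 + B^+2 = 1 ->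
  exists t, 0 <= t <= pi / 2 /\ cos t = A /\ sin t = B.
Proof.
move=> A0 B0 h.
have hA : -1 <= A <= 1 by apply/andP; split; nra.
have hB : -1 <= B <= 1 by apply/andP; split; nra.
have [/andP [t0 t1] ct] := acos_def hA.
have [/andP [s0 s1] st] := asin_def hB.
have cs : cos (asin B) = A.
  by rewrite cos_asin // (_ : 1 - B^+2 = A^+2) ?sqrtr_sqr ?ger0_norm //; lra.
have ss : sin (acos A) = B.
  by rewrite sin_acos // (_ : 1 - A^+2 = B^+2) ?sqrtr_sqr ?ger0_norm //; lra.
exists (acos A); split; last by [].
apply/andP; split => //.
have [sp|sn] := leP 0 (asin B).
  have : acos (cos (asin B)) = asin B.
    by apply: cosK; rewrite in_itv /=; apply/andP; split => //; have := pi_ge0 R; lra.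
  by rewrite cs => ->.
have : acos (cos (asin B)) = - asin B.
  by apply: cosKN; apply/andP; split; [have := pi_ge0 R; lra | lra].
by rewrite cs => ->; lra.
Qed.
Lemma shift2pi (u0 v0 : R) : -pi <= u0 <= pi -> -pi <= v0 <= pi ->
  exists u, cos u = cos u0 /\ sin u = sin u0 /\ 0 <= v0 - u < 2 * pi.
Proof.
move=> /andP [hu1 hu2] /andP [hv1 hv2].
have e2 : pi *+ 2 = 2 * pi :> R by rewrite mulr_natl.
have p0 := pi_gt0 R.
have [dn|dp] := ltP (v0 - u0) 0.
  exists (u0 - pi *+ 2).
  have k : u0 = (u0 - pi *+ 2) + pi *+ 2 by rewrite subrK.
  split; first by rewrite {2}k cosD2pi.
  split; first by rewrite {2}k sinD2pi.
  rewrite e2; apply/andP; split; lra.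
have [dl|dg] := ltP (v0 - u0) (2 * pi).
  by exists u0; split => //; split => //; apply/andP; split.
exists (u0 + pi *+ 2); rewrite cosD2pi sinD2pi; split => //; split => //.
rewrite e2; apply/andP; split; lra.
Qed.
Lemma euler_closed (a b c : R) : euler a b c =
  (Complex (cos (a/2) * (cos (b/2) * cos (c/2) + sin (b/2) * sin (c/2)))
           (sin (a/2) * (sin (b/2) * cos (c/2) + cos (b/2) * sin (c/2))),
   Complex (sin (a/2) * (cos (b/2) * cos (c/2) - sin (b/2) * sin (c/2)))
           (cos (a/2) * (cos (b/2) * sin (c/2) - sin (b/2) * cos (c/2)))).
Proof.
rewrite /euler /exp_p2 /exp_p1 /su2_mul mulNr cosN sinN /=.
congr (_,_); apply/eqP; rewrite eq_complex /=; apply/andP; split; apply/eqP; ring.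
Qed.

Lemma euler_uv (a u v : R) : euler a (v - u) (u + v) =
  (Complex (cos (a/2) * cos u) (sin (a/2) * sin v),
   Complex (sin (a/2) * cos v) (cos (a/2) * sin u)).
Proof.
rewrite euler_closed.
have hu : u = (u + v)/2 - (v - u)/2 by field.
have hv : v = (u + v)/2 + (v - u)/2 by field.
set x := (u + v)/2 in hu hv *; set y := (v - u)/2 in hu hv *.
rewrite [in cos u]hu [in sin u]hu [in cos v]hv [in sin v]hv cosB sinB cosD sinD.
congr (_,_); apply/eqP; rewrite eq_complex /=; apply/andP; split; apply/eqP; ring.
Qed.

Lemma euler_exists (q : S3) :
  exists a b c, euler_param a b c /\ su2_coords q = euler a b c.
Proof.
have hq := sphereP q; rewrite /sq4 in hq; rewrite /su2_coords /cx1 /cx2.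
move: (set_val q) hq => [[X1 Y1] [X2 Y2]] /= hq.
pose A := Num.sqrt (X1^+2 + Y2^+2); pose B := Num.sqrt (X2^+2 + Y1^+2).
have A0 : 0 <= A := sqrtr_ge0 _.
have B0 : 0 <= B := sqrtr_ge0 _.
have hA : A^+2 = X1^+2 + Y2^+2 by rewrite sqr_sqrtr // addr_ge0 // sqr_ge0.
have hB : B^+2 = X2^+2 + Y1^+2 by rewrite sqr_sqrtr // addr_ge0 // sqr_ge0.
have [u0 [hu0 [ex1 ey2]]] := polar A0 (esym hA).
have [v0 [hv0 [ex2 ey1]]] := polar B0 (esym hB).
have [t [/andP [t0 t1] [ct st]]] : exists t, 0 <= t <= pi / 2 /\ cos t = A /\ sin t = B.
  by apply: halfang => //; rewrite hA hB; lra.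
have [u [cu [su hb]]] := shift2pi hu0 hv0.
have e2 : t *+ 2 = 2 * t by rewrite mulr_natl.
exists (t *+ 2), (v0 - u), (u + v0); split.
  split => //; rewrite e2; apply/andP; split; lra.
rewrite euler_uv (_ : t *+ 2 / 2 = t); last by rewrite e2; field.
by rewrite ct st cu su -ex1 -ey2 -ex2 -ey1.
Qed.

Lemma coords_rotS q : su2_coords (rotS q) = rotC (su2_coords q).
Proof. by rewrite /su2_coords val_rotS cx_Hm. Qed.

Lemma step (q : S3) : eqclos (@Defs.approx R) (rotS q) q.
Proof.
apply: eqclos_sym; apply: eqclos_incl.
have [a [b [c [hp hq]]]] := euler_exists q.
exists a, b, c, a, b, (c + pi); split => //.
  by rewrite coords_rotS hq euler_pi.
split => //; exists (-1).
by rewrite opprD addrA subrr add0r mulN1r.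
Qed.

Lemma iter_step n (q : S3) : eqclos (@Defs.approx R) (iter n rotS q) q.
Proof.
elim: n => [|n IH] /=; first exact: eqclos_refl.
exact: eqclos_trans (step _) IH.
Qed.

Lemma H2 (u v : S3) : lens_rel 4 1 u v -> eqclos (@Defs.approx R) (psiS u) (psiS v).
Proof.
move=> [w [hw [e1 e2]]].
have [n wn] : exists n : nat, w = ii ^+ n by apply: roots4; exact: hw.
have hu : set_val u = iter n Imul (set_val v).
  apply: cx_inj; first by rewrite e1 cx1_iter wn.
  by rewrite cx2_iter -wn; exact: e2.
have -> : psiS u = iter n rotS (psiS v).
  apply: val_inj; change (set_val (psiS u) = set_val (iter n rotS (psiS v))).
  by rewrite val_iter_rotS !val_psiS hu Psi_iter.
exact: iter_step.
Qed.
End S.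

Theorem proposition2 (R : realType) :
  homeomorphic (SU2_mod_approx R) (lens_space R 4 1).
Proof.
apply: (@quot_homeo _ _ _ (@phiS R) (@psiS R)).
- exact: phiS_cont.
- exact: psiS_cont.
- exact: phiSK.
- exact: psiSK.
- exact: H1.
- exact: H2.
Qed.
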